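(* Let $\kappa$ be an integrable kernel on a type space $(\mathcal S,\mu)$ with $\mu(\mathcal S)=1$. Then $\hat\chi(\kappa)=\sum_{j=0}^\infty\langle\hat T_\kappa^j1,1\rangle_{\hat\mu}=\hat\mu(\mathcal S)\chi(\hat\kappa)=(1-\rho(\kappa))\chi(\hat\kappa)$.
   Context: A kernel is a symmetric measurable $\kappa:\mathcal S^2\to[0,\infty)$ with $\int_{\mathcal S^2}\kappa<\infty$ and $\int\kappa(x,y)d\mu(y)<\infty$ for every $x$. For a kernel $\kappa$ on a measure space $(\mathcal S,\nu)$ with $0<\nu(\mathcal S)<\infty$, the branching process $\mathfrak X_\kappa(x)$ starts with one particle of type $x$, each particle of type $y$ independently having children whose types form a Poisson process with intensity $\kappa(y,z)\,d\nu(z)$; $\chi(\kappa)=\nu(\mathcal S)^{-1}\int\mathbb E|\mathfrak X_\kappa(x)|\,d\nu(x)$. For $\kappa$ on $(\mathcal S,\mu)$: $\rho(\kappa;x)=\mathbb P(|\mathfrak X_\kappa(x)|=\infty)$, $\rho(\kappa)=\int\rho(\kappa;x)d\mu(x)$, $\hat\chi(\kappa)=\int\mathbb E(|\mathfrak X_\kappa(x)|;|\mathfrak X_\kappa(x)|<\infty)d\mu(x)$. $\hat\mu$ is the measure $d\hat\mu=(1-\rho(\kappa;x))d\mu(x)$; the dual kernel $\hat\kappa$ is the kernel on $(\mathcal S,\hat\mu)$ equal to $\kappa$ as a function, and $\hat T_\kappa f(x)=\int\kappa(x,y)f(y)\,d\hat\mu(y)$ is its integral operator. $\langle f,g\rangle_{\hat\mu}=\int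 fg\,d\hat\mu$; $1$ is the constant function. *)

(* Defs.v *)
From HB Require Import structures.
From mathcomp Require Import all_boot all_order all_algebra.
From mathcomp Require Import all_classical all_reals all_analysis.
Set Implicit Arguments. Unset Strict Implicit. Unset Printing Implicit Defensive.
Import Order.TTheory GRing.Theory Num.Theory.
Import numFieldNormedType.Exports.
Local Open Scope classical_set_scope.
Local Open Scope ring_scope.

(* The branching process "with kernel kap on the type
   space (S, w mu)" is the Poisson multi-type Galton--Watson process in which
   a particle of type y has children whose types form a Poisson process with
   intensity kap(y,z) w(z) dmu(z).  For the original process w = 1; for the
   dual kernel on (S, hat mu), w = 1 - rho(kap; .). *)

Section BranchingProcess.
Context {R : realType} {d : measure_display} {S : measurableType d}.
Variables (mu : {measure set S -> \bar R}) (kap : S -> S -> R) (w : S -> R).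

Definition bp_lam (x : S) : R := Rintegral mu setT (fun y => kap x y * w y).

Fixpoint conv_pow (a : nat -> R) (m : nat) : nat -> R :=
  match m with
  | 0 => fun j => (j == 0)%:R
  | m'.+1 => fun j => \sum_(i < j.+1) a i * conv_pow a m' (j - i)%N
  end.

(* bp_trunc n x k = P(Y_n(x) = k), where Y_n(x) is the number of particles
   in generations 0..n of the branching process started from one particle
   of type x.  Y_0 = 1 and Y_(n+1)(x) = 1 + sum over the children c of the
   root of independent copies of Y_n(type c): a compound Poisson law.  (The
   sum over the number m of children may be cut at m <= j because
   P(Y_n = 0) = 0.) *)
Fixpoint bp_trunc (n : nat) : S -> nat -> R :=
  match n with
  | 0 => fun _ k => (k == 1)%:R
  | n'.+1 => fun x k =>
      match k with
      | 0 => 0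
      | j.+1 =>
          \sum_(m < j.+1)
            (expR (- bp_lam x) / (m`!)%:R *
             conv_pow (fun i => Rintegral mu setT
                                  (fun y => kap x y * w y * bp_trunc n' y i))
                      m j)
      end
  end.

(* P(|X(x)| = k) for finite k: since Y_n increases to |X|, this is the limit
   of P(Y_n(x) = k). *)
Definition bp_size_pmf (x : S) (k : nat) : R := limn (fun n => bp_trunc n x k).

Definition bp_finite_prob (x : S) : \bar R :=
  (\sum_(0 <= k <oo) (bp_size_pmf x k)%:E)%E.

Definition bp_rho (x : S) : R := 1 - fine (bp_finite_prob x).

Definition bp_Efin (x : S) : \bar R :=
  (\sum_(0 <= k <oo) ((k%:R * bp_size_pmf x k)%:E))%E.

Definition bp_E (x : S) : \bar R :=
  (bp_Efin x + (if bp_rho x == 0%R then 0 else +oo))%E.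

Definition bp_chi : \bar R :=
  (((fine (\int[mu]_x (w x)%:E))^-1)%:E * \int[mu]_x ((w x)%:E * bp_E x))%E.

End BranchingProcess.

Section Dual.
Context {R : realType} {d : measure_display} {S : measurableType d}.
Variables (mu : {measure set S -> \bar R}) (kap : S -> S -> R).

Definition one_fun : S -> R := fun _ => 1.

Definition rho_x (x : S) : R := bp_rho mu kap one_fun x.
Definition rho_tot : \bar R := (\int[mu]_x (rho_x x)%:E)%E.
Definition chi_hat : \bar R := (\int[mu]_x bp_Efin mu kap one_fun x)%E.

(* density of hat mu w.r.t. mu *)
Definition hat_w (x : S) : R := 1 - rho_x x.
Definition hat_mu_S : \bar R := (\int[mu]_x (hat_w x)%:E)%E.

Fixpoint hatT_pow (j : nat) : S -> \bar R :=
  match j with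
  | 0 => fun _ => 1%E
  | j'.+1 => fun x => (\int[mu]_y ((kap x y)%:E * hatT_pow j' y * (hat_w y)%:E))%E
  end.

Definition hat_inner (f g : S -> \bar R) : \bar R :=
  (\int[mu]_x (f x * g x * (hat_w x)%:E))%E.

(* chi(hat kap): the dual kernel is kap on (S, hat mu) *)
Definition chi_dual : \bar R := bp_chi mu kap hat_w.

End Dual.

(* Main.v *)
Require Import Defs.
From HB Require Import structures.
From mathcomp Require Import all_boot all_order all_algebra.
From mathcomp Require Import all_classical all_reals all_analysis.
From mathcomp Require Import measurable_realfun.
From mathcomp Require Import ring lra.
Import Order.TTheory GRing.Theory Num.Theory.
Import numFieldNormedType.Exports.
Local Open Scope classical_set_scope.
Local Open Scope ring_scope.
Section Series.
Context {R : realType}.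
Local Open Scope ereal_scope.

Lemma term_le_series (f : nat -> \bar R) k : (forall i, 0 <= f i) ->
  f k <= \sum_(i <oo) f i.
Proof.
move=> f0; apply: (le_trans _ (nneseries_lim_ge k.+1 (fun n _ _ => f0 n))).
rewrite big_nat_recr//= leeDr//; exact: sume_ge0.
Qed.

Lemma fin_eseries (f : nat -> \bar R) n : (forall i, 0 <= f i) ->
  (forall i, (n <= i)%N -> f i = 0) -> \sum_(i <oo) f i = \sum_(i < n) f i.
Proof.
move=> f0 fn; rewrite (nneseries_split _ n)// add0n.
rewrite eseries0 ?adde0 ?big_mkord// => i ni _; exact: fn.
Qed.

Lemma esZr (f : nat -> \bar R) B : (forall i, 0 <= f i) -> 0 <= B ->
  \sum_(i <oo) (f i * B) = (\sum_(i <oo) f i) * B.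
Proof.
move=> f0 B0; case: B B0 => [b| |]// b0.
  under eq_eseriesr do rewrite muleC.
  by rewrite nneseriesZl// muleC.
have [fz|/existsNP[k fk]] := pselect (forall i, f i = 0).
  rewrite eseries0; last by move=> i _ _; rewrite fz mul0e.
  by rewrite eseries0 ?mul0e// => i _ _; rewrite fz.
have fk0 : 0 < f k by rewrite lt0e f0 andbT; apply/eqP.
have -> : \sum_(i <oo) f i * +oo = +oo.
  apply/eqP; rewrite eq_le leey/=; apply: (@le_trans _ _ (f k * +oo)).
    by rewrite muleC gt0_mulye.
  by apply: (term_le_series (fun i => f i * +oo)) => i; rewrite mule_ge0.
by rewrite muleC gt0_mulye// (lt_le_trans fk0)// term_le_series.
Qed.

Lemma series_shift0 (f : nat -> \bar R) : (forall i, 0 <= f i) -> f 0%N = 0 ->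
  \sum_(i <oo) f i = \sum_(i <oo) f i.+1.
Proof.
move=> f0 f00; rewrite nneseries_recl// f00 add0e.
by rewrite -(nneseries_addn 1)//; under eq_eseriesr do rewrite addn1.
Qed.

Lemma triangle_series (f : nat -> nat -> R) : (forall i k, (0 <= f i k)%R) ->
  \sum_(j <oo) (\sum_(i < j.+1) f i (j - i)%N)%:E =
  \sum_(i <oo) \sum_(k <oo) (f i k)%:E.
Proof.
move=> f0.
transitivity (\sum_(j <oo) \sum_(i <oo)
   (if (i <= j)%N then (f i (j - i)%N)%:E else 0)).
  apply: eq_eseriesr => j _; rewrite -sumEFin.
  rewrite (fin_eseries _ j.+1).
  - by apply: eq_bigr => i _; rewrite -ltnS ltn_ord.
  - by move=> i; case: ifP => // _; rewrite lee_fin.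
  - by move=> i ji; rewrite leqNgt ji.
rewrite nneseries_interchange; last first.
  by move=> i j; case: ifP => // _; rewrite lee_fin.
apply: eq_eseriesr => i _.
set g := fun j => if (i <= j)%N then (f i (j - i)%N)%:E else 0.
have g0 : forall j, 0 <= g j by move=> j; rewrite /g; case: ifP => // _; rewrite lee_fin.
rewrite (nneseries_split 0 i (fun k _ => g0 k)) add0n big_nat big1 ?add0e; last first.
  by move=> j /= ji; rewrite /g leqNgt ji.
rewrite -nneseries_addn//; apply: eq_eseriesr => k _.
by rewrite /g leq_addl addnK.
Qed.

Lemma cauchy_series (a c : nat -> R) : (forall i, (0 <= a i)%R) ->
  (forall i, (0 <= c i)%R) ->
  \sum_(j <oo) (\sum_(i < j.+1) a i * c (j - i)%N)%:E =
  (\sum_(i <oo) (a i)%:E) * (\sum_(k <oo) (c k)%:E).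
Proof.
move=> a0 c0; rewrite (triangle_series (fun i k => (a i * c k)%R)); last first.
  by move=> i k; rewrite mulr_ge0.
rewrite -esZr; last 2 first.
- by move=> i; rewrite lee_fin.
- by apply: nneseries_ge0 => i _ _; rewrite lee_fin.
apply: eq_eseriesr => i _; under eq_eseriesr do rewrite EFinM.
by rewrite nneseriesZl// => k _; rewrite lee_fin.
Qed.

Lemma wcauchy_series (a c : nat -> R) : (forall i, (0 <= a i)%R) ->
  (forall i, (0 <= c i)%R) ->
  \sum_(j <oo) (j%:R * \sum_(i < j.+1) a i * c (j - i)%N)%:E =
  (\sum_(i <oo) (i%:R * a i)%:E) * (\sum_(k <oo) (c k)%:E) +
  (\sum_(i <oo) (a i)%:E) * (\sum_(k <oo) (k%:R * c k)%:E).
Proof.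
move=> a0 c0.
transitivity (\sum_(j <oo) (\sum_(i < j.+1) ((i%:R * a i) * c (j - i)%N +
                a i * ((j - i)%N%:R * c (j - i)%N))%R)%:E).
  apply: eq_eseriesr => j _; congr EFin; rewrite mulr_sumr; apply: eq_bigr => i _.
  have ij : (i <= j)%N by rewrite -ltnS ltn_ord.
  by rewrite -{1}(subnKC ij) natrD; ring.
rewrite (triangle_series (fun i k => ((i%:R * a i) * c k + a i * (k%:R * c k))%R));
  last by move=> i k; rewrite addr_ge0// ?mulr_ge0.
transitivity (\sum_(i <oo) ((i%:R * a i)%:E * \sum_(k <oo) (c k)%:E +
                           (a i)%:E * \sum_(k <oo) (k%:R * c k)%:E)).
  apply: eq_eseriesr => i _; under eq_eseriesr do rewrite EFinD.
  rewrite nneseriesD; last first.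
    by move=> k _ _; rewrite lee_fin !mulr_ge0.
    by move=> k _ _; rewrite lee_fin !mulr_ge0.
  under eq_eseriesr do rewrite EFinM.
  rewrite nneseriesZl; last by move=> k _; rewrite lee_fin.
  congr (_ + _); under eq_eseriesr do rewrite EFinM.
  by rewrite nneseriesZl// => k _; rewrite lee_fin mulr_ge0.
rewrite nneseriesD; last first.
  by move=> i _ _; apply: mule_ge0; rewrite ?lee_fin ?mulr_ge0//; apply: nneseries_ge0 => k _ _; rewrite lee_fin ?mulr_ge0.
  by move=> i _ _; apply: mule_ge0; rewrite ?lee_fin ?mulr_ge0//; apply: nneseries_ge0 => k _ _; rewrite lee_fin ?mulr_ge0.
rewrite esZr; last 2 first.
  by move=> i; rewrite lee_fin mulr_ge0.
  by apply: nneseries_ge0 => k _ _; rewrite lee_fin.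
rewrite esZr//; try by move=> i; rewrite lee_fin.
by apply: nneseries_ge0 => k _ _; rewrite lee_fin mulr_ge0.
Qed.

End Series.

Section Conv.
Context {R : realType}.
Implicit Types (a b : nat -> R).

Lemma conv_ge0 a m j : (forall i, 0 <= a i) -> 0 <= conv_pow a m j.
Proof.
move=> a0; elim: m j => [|m IH] j /=; first by rewrite ler0n.
by apply: sumr_ge0 => i _; rewrite mulr_ge0.
Qed.

Lemma conv_ext a b m j : (forall i, (i <= j)%N -> a i = b i) ->
  conv_pow a m j = conv_pow b m j.
Proof.
elim: m j => [|m IH] j ab //=; apply: eq_bigr => i _.
have ij : (i <= j)%N by rewrite -ltnS ltn_ord.
rewrite ab// (IH (j - i)%N)// => k kj; apply: ab.
by apply: leq_trans kj (leq_subr _ _).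
Qed.

Lemma conv_zero a m j : a 0%N = 0 -> (j < m)%N -> conv_pow a m j = 0.
Proof.
move=> a00; elim: m j => [|m IH] j //= jm; apply: big1 => i _.
case: (posnP i) => [->|i0]; first by rewrite a00 mul0r.
rewrite IH ?mulr0//; rewrite ltnS in jm.
by rewrite (leq_trans _ jm)// ltn_subrL i0 (leq_trans i0)// -ltnS ltn_ord.
Qed.

Lemma conv1 a j : conv_pow a 1 j = a j.
Proof.
rewrite /= big_ord_recr/= subnn eqxx mulr1 big1 ?add0r// => i _.
by rewrite subn_eq0 leqNgt ltn_ord mulr0.
Qed.

Local Open Scope ereal_scope.

Lemma conv_series a A m : (forall i, (0 <= a i)%R) ->
  \sum_(i <oo) (a i)%:E = A%:E ->
  \sum_(j <oo) (conv_pow a m j)%:E = (A ^+ m)%:E.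
Proof.
move=> a0 aA; elim: m => [|m IH].
  rewrite (fin_eseries _ 1).
  - by rewrite big_ord1 /= expr0.
  - by move=> i; rewrite lee_fin conv_ge0.
  - by move=> i i1; rewrite /= eqn0Ngt i1.
transitivity (\sum_(j <oo) (\sum_(i < j.+1) a i * conv_pow a m (j - i)%N)%:E); first by [].
rewrite cauchy_series// ?aA ?IH; first by rewrite -EFinM exprS.
by move=> i; exact: conv_ge0.
Qed.

Lemma conv_mean a A m : (forall i, (0 <= a i)%R) ->
  \sum_(i <oo) (a i)%:E = A%:E ->
  \sum_(j <oo) (j%:R * conv_pow a m.+1 j)%:E =
  (m.+1%:R * A ^+ m)%:E * \sum_(i <oo) (i%:R * a i)%:E.
Proof.
move=> a0 aA.
have A0 : (0 <= A)%R by rewrite -lee_fin -aA; apply: nneseries_ge0 => i _ _; rewrite lee_fin.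
have B0 : 0 <= \sum_(i <oo) (i%:R * a i)%:E.
  by apply: nneseries_ge0 => i _ _; rewrite lee_fin mulr_ge0.
elim: m => [|m IH].
  by rewrite expr0 mulr1 mul1e; apply: eq_eseriesr => j _; rewrite conv1.
transitivity (\sum_(j <oo)
   (j%:R * \sum_(i < j.+1) a i * conv_pow a m.+1 (j - i)%N)%:E); first by [].
rewrite wcauchy_series//; last by move=> i; exact: conv_ge0.
rewrite IH (conv_series _ _ _ a0 aA) aA muleA -EFinM [X in X + _]muleC -ge0_muleDl ?lee_fin; last 2 first.
- by rewrite exprn_ge0.
- by rewrite !mulr_ge0// exprn_ge0.
congr (_ * _); congr EFin; rewrite !exprS; ring.
Qed.

Lemma exp_series (x : R) :
  \sum_(m <oo) ((x ^+ m) / (m`!)%:R)%:E = (expR x)%:E.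
Proof.
rewrite expRE -EFin_lim; last first.
  rewrite /pseries/=; under eq_fun do rewrite mulrC.
  exact: is_cvg_series_exp_coeff.
apply/congr_lim/funext => n/=; rewrite /pseries/= /series/= -sumEFin//.
by apply: eq_bigr => m _; rewrite mulrC.
Qed.

Lemma G1 a A c : (forall i, (0 <= a i)%R) -> a 0%N = 0%R ->
  \sum_(i <oo) (a i)%:E = A%:E -> (0 <= c)%R ->
  \sum_(j <oo) (\sum_(m < j.+1) c / (m`!)%:R * conv_pow a m j)%:E =
  (c * expR A)%:E.
Proof.
move=> a0 a00 aA c0.
have t0 : forall m j, (0 <= c / (m`!)%:R * conv_pow a m j)%R.
  by move=> m j; rewrite mulr_ge0 ?divr_ge0// conv_ge0.
transitivity (\sum_(j <oo) \sum_(m <oo) (c / (m`!)%:R * conv_pow a m j)%:E).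
  apply: eq_eseriesr => j _; rewrite -sumEFin (fin_eseries _ j.+1)//.
  - by move=> m; rewrite lee_fin.
  - by move=> m jm; rewrite conv_zero ?mulr0.
rewrite nneseries_interchange; last by move=> *; rewrite lee_fin.
transitivity (\sum_(m <oo) (c%:E * ((A ^+ m) / (m`!)%:R)%:E)).
  apply: eq_eseriesr => m _; under eq_eseriesr do rewrite EFinM.
  rewrite nneseriesZl; last by move=> j _; rewrite lee_fin conv_ge0.
  by rewrite (conv_series _ _ _ a0 aA) -!EFinM; congr EFin; ring.
rewrite nneseriesZl ?exp_series// => m _.
rewrite lee_fin divr_ge0// exprn_ge0// -lee_fin -aA.
by apply: nneseries_ge0 => i _ _; rewrite lee_fin.
Qed.

Lemma G2 a A c : (forall i, (0 <= a i)%R) -> a 0%N = 0%R ->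
  \sum_(i <oo) (a i)%:E = A%:E -> (0 <= c)%R ->
  \sum_(j <oo) (j%:R * \sum_(m < j.+1) c / (m`!)%:R * conv_pow a m j)%:E =
  (c * expR A)%:E * \sum_(i <oo) (i%:R * a i)%:E.
Proof.
move=> a0 a00 aA c0.
have A0 : (0 <= A)%R by rewrite -lee_fin -aA; apply: nneseries_ge0 => i _ _; rewrite lee_fin.
have B0 : 0 <= \sum_(i <oo) (i%:R * a i)%:E.
  by apply: nneseries_ge0 => i _ _; rewrite lee_fin mulr_ge0.
have t0 : forall m (j : nat), (0 <= c / (m`!)%:R * (j%:R * conv_pow a m j))%R.
  by move=> m j; rewrite mulr_ge0 ?divr_ge0// mulr_ge0// conv_ge0.
transitivity (\sum_(j <oo) \sum_(m <oo) (c / (m`!)%:R * (j%:R * conv_pow a m j))%:E).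
  apply: eq_eseriesr => j _; rewrite mulr_sumr -sumEFin (fin_eseries _ j.+1)//.
  - by apply: eq_bigr => m _; congr EFin; ring.
  - by move=> m; rewrite lee_fin.
  - by move=> m jm; rewrite conv_zero ?mulr0.
rewrite nneseries_interchange; last by move=> *; rewrite lee_fin.
rewrite series_shift0; last 2 first.
- by move=> m; apply: nneseries_ge0 => j _ _; rewrite lee_fin.
- rewrite eseries0// => j _ _; case: j => [|j]; first by rewrite mul0r mulr0.
  by rewrite /= mulr0 mulr0.
transitivity (\sum_(m <oo) ((c * (A ^+ m / (m`!)%:R))%:E * \sum_(i <oo) (i%:R * a i)%:E)).
  apply: eq_eseriesr => m _; under eq_eseriesr do rewrite EFinM.
  rewrite nneseriesZl; last by move=> j _; rewrite lee_fin mulr_ge0// conv_ge0.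
  rewrite (conv_mean _ _ _ a0 aA) muleA -EFinM; congr (EFin _ * _).
  rewrite factS natrM; field.
  by rewrite pnatr_eq0 -lt0n fact_gt0/= nat1r pnatr_eq0.
rewrite (esZr (fun m => (c * (A ^+ m / (m`!)%:R))%:E))//; last by move=> m; rewrite lee_fin mulr_ge0// divr_ge0// exprn_ge0.
congr (_ * _); under eq_eseriesr do rewrite EFinM.
by rewrite nneseriesZl ?exp_series// => m _; rewrite lee_fin divr_ge0// exprn_ge0.
Qed.

End Conv.
Class Setup {R : realType} {d : measure_display} {S : measurableType d}
  (mu : {measure set S -> \bar R}) (kap : S -> S -> R) : Prop := {
  s_mu1 : mu setT = 1%E;
  s_k0 : forall x y, 0 <= kap x y;
  s_km : measurable_fun setT (fun p : S * S => kap p.1 p.2);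
  s_kint : forall x, (\int[mu]_y (kap x y)%:E < +oo)%E }.

Class WOK {R : realType} {d : measure_display} {S : measurableType d}
  (w : S -> R) : Prop := {
  s_w0 : forall y, 0 <= w y;
  s_w1 : forall y, w y <= 1;
  s_wm : measurable_fun setT w }.

Section Gen.
Context {R : realType} {d : measure_display} {S : measurableType d}.
Context {mu : {measure set S -> \bar R}} {kap : S -> S -> R} {Hs : Setup mu kap}.
Let mu1 : mu setT = 1%E := s_mu1.
Definition pmu := (mu : set S -> \bar R).
HB.instance Definition _ := Measure.on pmu.
HB.instance Definition _ := Measure_isProbability.Build _ _ _ pmu mu1.
Let k0 : forall x y, 0 <= kap x y := s_k0.
Let km : measurable_fun setT (fun p : S * S => kap p.1 p.2) := s_km.
Let kint : forall x, (\int[mu]_y (kap x y)%:E < +oo)%E := s_kint.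
Context {w : S -> R} {Hw : WOK w}.
Let w0 : forall y, 0 <= w y := s_w0.
Let w1 : forall y, w y <= 1 := s_w1.
Let wm : measurable_fun setT w := s_wm.

Local Notation T := (bp_trunc mu kap w).
Local Notation lam := (bp_lam mu kap w).

Lemma mkap x : measurable_fun setT (kap x).
Proof. exact: (measurable_fun_pair2 x km). Qed.

Lemma kapint x : mu.-integrable setT (EFin \o kap x).
Proof.
apply/integrableP; split; first exact/measurable_EFinP/mkap.
rewrite (eq_integral (fun y => (kap x y)%:E)) ?kint// => y _.
by rewrite /comp abse_EFin ger0_norm.
Qed.

Lemma int_le x (h : S -> R) (C : R) : 0 <= C -> measurable_fun setT h ->
  (forall y, 0 <= h y <= C * kap x y) -> mu.-integrable setT (EFin \o h).
Proof.
move=> C0 mh hb.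
have iC : mu.-integrable setT (fun y => C%:E * (EFin \o kap x) y)%E.
  exact: (integrableZl measurableT C (kapint x)).
apply: le_integrable iC => //; first exact/measurable_EFinP.
move=> y _; rewrite /comp !abse_EFin lee_fin.
case/andP: (hb y) => h0 hC; rewrite !ger0_norm// mulr_ge0//.
Qed.

Lemma RintE x (h : S -> R) (C : R) : 0 <= C -> measurable_fun setT h ->
  (forall y, 0 <= h y <= C * kap x y) ->
  (Rintegral mu setT h)%:E = (\int[mu]_y (h y)%:E)%E.
Proof.
move=> C0 mh hb; rewrite /Rintegral fineK//.
by apply: integrable_fin_num => //; exact: (int_le _ _ _ C0 mh hb).
Qed.

Lemma mRint (F : S -> S -> R) :
  measurable_fun setT (fun p : S * S => F p.1 p.2) -> (forall x y, 0 <= F x y) ->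
  measurable_fun setT (fun x => Rintegral mu setT (F x)).
Proof.
move=> mF F0; rewrite /Rintegral.
apply: (measurableT_comp (f := fine)) => //.
have := measurable_fun_fubini_tonelli_F (m2 := pmu) (fun p => (F p.1 p.2)%:E)
  ((measurable_EFinP _ _).2 mF) (fun p => F0 p.1 p.2).
by [].
Qed.

Lemma mjoint (g : S -> R) : measurable_fun setT g ->
  measurable_fun setT (fun p : S * S => kap p.1 p.2 * w p.2 * g p.2).
Proof.
move=> mg; apply: measurable_funM; first apply: measurable_funM => //.
- exact: measurableT_comp wm measurable_snd.
- exact: measurableT_comp mg measurable_snd.
Qed.

Lemma mkwg x (g : S -> R) : measurable_fun setT g ->
  measurable_fun setT (fun y => kap x y * w y * g y).
Proof.
move=> mg; apply: measurable_funM => //; apply: measurable_funM => //; exact: mkap.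
Qed.

Lemma mkw x : measurable_fun setT (fun y => kap x y * w y).
Proof. apply: measurable_funM => //; exact: mkap. Qed.

Definition aT n x i := Rintegral mu setT (fun y => kap x y * w y * T n y i).

Lemma T_succ n x j : T n.+1 x j.+1 =
  \sum_(m < j.+1) expR (- lam x) / (m`!)%:R * conv_pow (aT n x) m j.
Proof. by []. Qed.

Lemma T_0 n x : T n x 0 = 0.
Proof. by case: n. Qed.

Lemma kwg_le x y (g : R) : 0 <= g <= 1 -> 0 <= kap x y * w y * g <= 1 * kap x y.
Proof.
case/andP=> g0 g1; rewrite !mulr_ge0//= mul1r.
rewrite -[leRHS]mulr1 -mulrA ler_wpM2l// -[leRHS]mulr1.
by apply: ler_pM.
Qed.

Lemma T_ge0 n x k : 0 <= T n x k.
Proof.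
elim: n x k => [|n IH] x [|j] //=; rewrite ?ler0n//.
apply: sumr_ge0 => m _; rewrite mulr_ge0 ?divr_ge0 ?expR_ge0 ?ler0n//.
apply: conv_ge0 => i; apply: Rintegral_ge0 => y _; rewrite !mulr_ge0//.
Qed.

Lemma mlam : measurable_fun setT lam.
Proof.
rewrite /bp_lam; apply: (mRint (fun x y => kap x y * w y)).
- apply: measurable_funM => //; exact: measurableT_comp wm measurable_snd.
- by move=> x y; rewrite mulr_ge0.
Qed.

Lemma mconv (a : S -> nat -> R) m j :
  (forall i, measurable_fun setT (fun x => a x i)) ->
  measurable_fun setT (fun x => conv_pow (a x) m j).
Proof.
move=> ma; elim: m j => [|m IH] j /=; first exact: measurable_cst.
apply: measurable_sum => i; apply: measurable_funM => //; exact: IH.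
Qed.

Lemma mT n k : measurable_fun setT (fun x => T n x k).
Proof.
elim: n k => [|n IH] [|j]; try exact: measurable_cst.
have -> : (fun x => T n.+1 x j.+1) = fun x =>
  \sum_(m < j.+1) expR (- lam x) / (m`!)%:R * conv_pow (aT n x) m j by [].
apply: measurable_sum => m; apply: measurable_funM.
  apply: measurable_funM => //.
  exact (measurableT_comp (@measurable_expR R) (measurable_funN mlam)).
apply: (mconv (aT n)) => i; rewrite /aT.
apply: (mRint (fun x y => kap x y * w y * T n y i)).
  exact: (mjoint _ (IH i)).
by move=> x y; rewrite !mulr_ge0// T_ge0.
Qed.

Local Open Scope ereal_scope.

Lemma sumInt x (g : nat -> S -> R) (c : nat -> R) :
  (forall i y, (0 <= g i y)%R) -> (forall i, measurable_fun setT (g i)) ->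
  (forall i, (0 <= c i)%R) ->
  \sum_(i <oo) ((c i)%:E * \int[mu]_y (kap x y * w y * g i y)%:E) =
  \int[mu]_y ((kap x y * w y)%:E * \sum_(i <oo) (c i * g i y)%:E).
Proof.
move=> g0 mg c0.
transitivity (\sum_(i <oo) \int[mu]_y ((kap x y * w y)%:E * (c i * g i y)%:E)).
  apply: eq_eseriesr => i _; rewrite -ge0_integralZl_EFin//.
  - by apply: eq_integral => y _; rewrite -!EFinM; congr EFin; ring.
  - by move=> y _; rewrite lee_fin !mulr_ge0.
  - by apply/measurable_EFinP; apply: mkwg.
rewrite -integral_nneseries//.
- apply: eq_integral => y _; rewrite nneseriesZl// => i _.
  by rewrite lee_fin mulr_ge0.
- move=> i; apply/measurable_EFinP.
  by apply: measurable_funM; [exact: mkw|apply: measurable_funM].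
- by move=> i y _; rewrite lee_fin !mulr_ge0.
Qed.

Lemma RintaT n x i : (forall y k, (T n y k <= 1)%R) ->
  (aT n x i)%:E = \int[mu]_y (kap x y * w y * T n y i)%:E.
Proof.
move=> T1; rewrite /aT (RintE x _ 1%R)//; try exact: (mkwg x _ (mT n i)).
by move=> y; apply: kwg_le; rewrite T_ge0 T1.
Qed.

Lemma lamE x : (lam x)%:E = \int[mu]_y (kap x y * w y)%:E.
Proof.
rewrite /bp_lam (RintE x _ 1%R)//; try exact: mkw.
  move=> y; have := kwg_le x y 1%R; rewrite mulr1; apply.
  by rewrite ler01 lexx.
Qed.

Lemma aT0 n x : aT n x 0 = 0%R.
Proof.
rewrite /aT; under eq_Rintegral do rewrite T_0 mulr0.
by rewrite /Rintegral integral0.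
Qed.

Lemma aT_ge0 n x i : (0 <= aT n x i)%R.
Proof. by apply: Rintegral_ge0 => y _; rewrite !mulr_ge0// T_ge0. Qed.

Lemma Tsum n x : \sum_(k <oo) (T n x k)%:E = 1.
Proof.
elim: n x => [|n IH] x.
  rewrite (fin_eseries _ 2).
  - by rewrite big_ord_recr/= big_ord1/= add0e.
  - by move=> k; rewrite lee_fin ler0n.
  - by move=> k k2 /=; case: k k2 => [|[|k]].
have T1 : forall y k, (T n y k <= 1)%R.
  by move=> y k; rewrite -lee_fin -(IH y); apply: (term_le_series (fun k => (T n y k)%:E)) => i; rewrite lee_fin T_ge0.
rewrite series_shift0; last 2 first.
- by move=> k; rewrite lee_fin T_ge0.
- by rewrite T_0.
transitivity (\sum_(j <oo)
  (\sum_(m < j.+1) expR (- lam x) / (m`!)%:R * conv_pow (aT n x) m j)%:E).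
  by [].
rewrite (G1 _ (lam x)) ?expR_ge0 ?aT0//; last 2 first.
- by move=> i; exact: aT_ge0.
- transitivity (\sum_(i <oo) (1%:E * \int[mu]_y (kap x y * w y * T n y i)%:E)).
    by apply: eq_eseriesr => i _; rewrite mul1e RintaT.
  rewrite (sumInt _ _ (fun=> 1%R))//; last first.
  - exact: mT.
  - by move=> i y; exact: T_ge0.
  rewrite lamE; apply: eq_integral => y _.
  under eq_eseriesr do rewrite mul1r.
  by rewrite IH mule1.
by rewrite expRN mulVf// gt_eqF// expR_gt0.
Qed.

Lemma T_le1 n y k : (T n y k <= 1)%R.
Proof.
rewrite -lee_fin -(Tsum n y).
by apply: (term_le_series (fun k => (T n y k)%:E)) => i; rewrite lee_fin T_ge0.
Qed.

Lemma sum_aT n x : \sum_(i <oo) (aT n x i)%:E = (lam x)%:E.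
Proof.
transitivity (\sum_(i <oo) (1%:E * \int[mu]_y (kap x y * w y * T n y i)%:E)).
  by apply: eq_eseriesr => i _; rewrite mul1e RintaT// => y k; exact: T_le1.
rewrite (sumInt _ _ (fun=> 1%R))//; last first.
- exact: mT.
- by move=> i y; exact: T_ge0.
rewrite lamE; apply: eq_integral => y _.
under eq_eseriesr do rewrite mul1r.
by rewrite Tsum mule1.
Qed.

Fixpoint powW (j : nat) : S -> \bar R :=
  match j with
  | 0 => fun _ => 1
  | j'.+1 => fun x => \int[mu]_y ((kap x y)%:E * powW j' y * (w y)%:E)
  end.

Lemma powW_ge0 j x : 0 <= powW j x.
Proof.
elim: j x => [|j IH] x /=; first by rewrite lee01.
by apply: integral_ge0 => y _; rewrite !mule_ge0// lee_fin.
Qed.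

Lemma mpowW j : measurable_fun setT (powW j).
Proof.
elim: j => [|j IH] /=; first exact: measurable_cst.
have mf : measurable_fun setT
    (fun p : S * S => (kap p.1 p.2)%:E * powW j p.2 * (w p.2)%:E).
  apply: emeasurable_funM; first apply: emeasurable_funM.
  - exact/measurable_EFinP.
  - exact: measurableT_comp IH measurable_snd.
  - apply/measurable_EFinP; exact: measurableT_comp wm measurable_snd.
have f0 : forall p : S * S, 0 <= (kap p.1 p.2)%:E * powW j p.2 * (w p.2)%:E.
  by move=> p; rewrite !mule_ge0 ?lee_fin ?powW_ge0.
have := measurable_fun_fubini_tonelli_F (m2 := pmu) _ mf f0.
by [].
Qed.

Lemma Tmean n x :
  \sum_(k <oo) (k%:R * T n x k)%:E = \sum_(j < n.+1) powW j x.
Proof.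
elim: n x => [|n IH] x.
  rewrite big_ord1 (fin_eseries _ 2).
  - by rewrite big_ord_recr/= big_ord1/= mul0r add0e mul1r.
  - by move=> k; rewrite lee_fin mulr_ge0 ?ler0n.
  - by move=> k k2 /=; case: k k2 => [|[|k]] //= _; rewrite mulr0.
rewrite series_shift0; last 2 first.
- by move=> k; rewrite lee_fin mulr_ge0 ?T_ge0.
- by rewrite mul0r.
transitivity (\sum_(j <oo) ((T n.+1 x j.+1)%:E + (j%:R * T n.+1 x j.+1)%:E)).
  by apply: eq_eseriesr => j _; rewrite -EFinD -natr1 mulrDl mul1r addrC.
rewrite nneseriesD; last 2 first.
- by move=> j _ _; rewrite lee_fin T_ge0.
- by move=> j _ _; rewrite lee_fin mulr_ge0 ?T_ge0.
have -> : \sum_(j <oo) (T n.+1 x j.+1)%:E = 1.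
  rewrite -(Tsum n.+1 x) [RHS]series_shift0//;
    (by move=> k; rewrite lee_fin T_ge0) || (by rewrite T_0).
transitivity (1 + \sum_(j <oo) (j%:R *
  \sum_(m < j.+1) expR (- lam x) / (m`!)%:R * conv_pow (aT n x) m j)%:E).
  by [].
rewrite (G2 _ (lam x) _ (aT_ge0 n x) (aT0 n x) (sum_aT n x) (expR_ge0 _)).
rewrite expRN mulVf ?gt_eqF ?expR_gt0// mul1e.
transitivity (1 + \sum_(i <oo) ((i%:R)%:E * \int[mu]_y (kap x y * w y * T n y i)%:E)).
  congr (_ + _); apply: eq_eseriesr => i _; rewrite EFinM RintaT// => y k.
  exact: T_le1.
rewrite (sumInt _ _ (fun i => i%:R))//; last first.
- exact: mT.
- by move=> i y; exact: T_ge0.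
transitivity (1 + \int[mu]_y (\sum_(j < n.+1) ((kap x y * w y)%:E * powW j y))).
  congr (_ + _); apply: eq_integral => y _.
  by rewrite IH ge0_sume_distrr// => j _; exact: powW_ge0.
rewrite ge0_integral_sum//; last 2 first.
- move=> j; apply: emeasurable_funM; first exact/measurable_EFinP/mkw.
  exact: mpowW.
- by move=> j y _; rewrite mule_ge0 ?powW_ge0// lee_fin mulr_ge0.
rewrite [RHS]big_ord_recl/=; congr (_ + _); apply: eq_bigr => j _.
apply: eq_integral => y _.
by rewrite EFinM muleAC.
Qed.

Lemma Tstab n x i : (i <= n)%N -> T n.+1 x i = T n x i.
Proof.
elim: n x i => [|n IH] x [|j] jn; rewrite ?T_0//.
rewrite !T_succ; apply: eq_bigr => m _; congr (_ * _)%R; apply: conv_ext => i ij.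
rewrite /aT; congr (Rintegral _ _ _); apply/funext => y; rewrite IH//.
by rewrite (leq_trans ij).
Qed.

Lemma Tstab' n x i : (i <= n)%N -> T n x i = T i x i.
Proof.
elim: n => [|n IH] h; first by move: h; rewrite leqn0 => /eqP->.
move: h; rewrite leq_eqVlt => /orP[/eqP->//|]; rewrite ltnS => h.
by rewrite Tstab// IH.
Qed.

Lemma pmfE x k : bp_size_pmf mu kap w x k = T k x k.
Proof.
rewrite /bp_size_pmf; apply: lim_near_cst.
  exact: norm_hausdorff.
by apply: filterS (nbhs_infty_ge k) => n kn; exact: Tstab'.
Qed.

Definition aP x i := Rintegral mu setT (fun y => (kap x y * w y * T i y i)%R).

Lemma P_rec x j : T j.+1 x j.+1 =
  (\sum_(m < j.+1) expR (- lam x) / (m`!)%:R * conv_pow (aP x) m j)%R.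
Proof.
rewrite T_succ; apply: eq_bigr => m _; congr (_ * _)%R; apply: conv_ext => i ij.
by rewrite /aT /aP; congr (Rintegral _ _ _); apply/funext => y; rewrite (Tstab' _ y _ ij).
Qed.

Lemma aP_ge0 x i : (0 <= aP x i)%R.
Proof. exact: aT_ge0. Qed.

Lemma aP0 x : aP x 0 = 0%R.
Proof. exact: aT0. Qed.

Lemma Psum_le x : \sum_(k <oo) (T k x k)%:E <= 1.
Proof.
apply: lime_le; first by apply: is_cvg_nneseries => k _; rewrite lee_fin T_ge0.
apply: nearW => K /=; rewrite -(Tsum K x).
apply: le_trans (nneseries_lim_ge K _); last by move=> k _ _; rewrite lee_fin T_ge0.
rewrite le_eqVlt; apply/orP; left; apply/eqP.
by apply: eq_big_nat => k /andP[_ kK]; rewrite (Tstab' _ x _ (ltnW kK)).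
Qed.

Lemma powW_series_ge K x : \sum_(j < K) powW j x <= \sum_(j <oo) powW j x.
Proof.
have := @nneseries_lim_ge R (fun j => powW j x) xpredT 0%N K (fun j _ _ => powW_ge0 j x).
by rewrite big_mkord.
Qed.

Lemma Pmean_le x :
  \sum_(k <oo) (k%:R * T k x k)%:E <= \sum_(j <oo) powW j x.
Proof.
apply: lime_le; first by apply: is_cvg_nneseries => k _; rewrite lee_fin mulr_ge0 ?T_ge0.
apply: nearW => K /=; apply: le_trans (powW_series_ge K.+1 x).
rewrite -Tmean.
apply: le_trans (nneseries_lim_ge K _); last by move=> k _ _; rewrite lee_fin mulr_ge0 ?T_ge0.
rewrite le_eqVlt; apply/orP; left; apply/eqP.
by apply: eq_big_nat => k /andP[_ kK]; rewrite (Tstab' _ x _ (ltnW kK)).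
Qed.

Definition Qs x := \sum_(k <oo) (T k x k)%:E.
Definition qf x := fine (Qs x).

Lemma Qs_ge0 x : 0 <= Qs x.
Proof. by apply: nneseries_ge0 => k _ _; rewrite lee_fin T_ge0. Qed.

Lemma QsE x : Qs x = (qf x)%:E.
Proof.
rewrite /qf fineK// ge0_fin_numE ?Qs_ge0//.
exact: (le_lt_trans (Psum_le x) (ltry _)).
Qed.

Lemma qf_ge0 x : (0 <= qf x)%R.
Proof. by rewrite -lee_fin -QsE Qs_ge0. Qed.

Lemma qf_le1 x : (qf x <= 1)%R.
Proof. by rewrite -lee_fin -QsE Psum_le. Qed.

Lemma mQs : measurable_fun setT Qs.
Proof.
rewrite /Qs; apply: ge0_emeasurable_sum.
- by move=> k y _ _; rewrite lee_fin T_ge0.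
- by move=> k _; apply/measurable_EFinP; exact: (mT k k).
Qed.

Lemma mqf : measurable_fun setT qf.
Proof. exact: (measurableT_comp (f := fine) _ mQs). Qed.

Lemma sum_aP x : \sum_(i <oo) (aP x i)%:E =
  (Rintegral mu setT (fun y => (kap x y * w y * qf y)%R))%:E.
Proof.
transitivity (\sum_(i <oo) (1%:E * \int[mu]_y (kap x y * w y * T i y i)%:E)).
  apply: eq_eseriesr => i _; rewrite mul1e /aP (RintE x _ 1%R)//; try exact: (mkwg x _ (mT i i)).
  by move=> y; apply: kwg_le; rewrite T_ge0 T_le1.
rewrite (sumInt _ (fun i y => T i y i) (fun=> 1%R))//; last first.
- by move=> i; exact: (mT i i).
- by move=> i y; exact: T_ge0.
rewrite (RintE x _ 1%R)//; try exact: (mkwg x _ mqf); last first.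
  by move=> y; apply: kwg_le; rewrite qf_ge0 qf_le1.
apply: eq_integral => y _; under eq_eseriesr do rewrite mul1r.
by rewrite -/(Qs y) QsE -EFinM.
Qed.

Lemma Qfix x : Qs x =
  (expR (- lam x) * expR (Rintegral mu setT (fun y => (kap x y * w y * qf y)%R)))%:E.
Proof.
rewrite /Qs series_shift0; last 2 first.
- by move=> k; rewrite lee_fin T_ge0.
- by rewrite T_0.
under eq_eseriesr do rewrite P_rec.
by rewrite (G1 _ _ _ (aP_ge0 x) (aP0 x) (sum_aP x) (expR_ge0 _)).
Qed.

Definition Ms x := \sum_(k <oo) (k%:R * T k x k)%:E.

Lemma mMs : measurable_fun setT Ms.
Proof.
rewrite /Ms; apply: ge0_emeasurable_sum.
- by move=> k y _ _; rewrite lee_fin mulr_ge0 ?T_ge0.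
- move=> k _; apply/measurable_EFinP; apply: measurable_funM => //.
  exact: (mT k k).
Qed.

Lemma Ms_ge0 x : 0 <= Ms x.
Proof. by apply: nneseries_ge0 => k _ _; rewrite lee_fin mulr_ge0 ?T_ge0. Qed.

Lemma Mfix : (forall y, Qs y = 1) ->
  forall x, Ms x = 1 + \int[mu]_y ((kap x y)%:E * Ms y * (w y)%:E).
Proof.
move=> Q1 x.
have q1 : forall y, qf y = 1%R by move=> y; rewrite /qf Q1.
rewrite /Ms series_shift0; last 2 first.
- by move=> k; rewrite lee_fin mulr_ge0 ?T_ge0.
- by rewrite mul0r.
transitivity (\sum_(j <oo) ((T j.+1 x j.+1)%:E + (j%:R * T j.+1 x j.+1)%:E)).
  by apply: eq_eseriesr => j _; rewrite -EFinD -natr1 mulrDl mul1r addrC.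
rewrite nneseriesD; last 2 first.
- by move=> j _ _; rewrite lee_fin T_ge0.
- by move=> j _ _; rewrite lee_fin mulr_ge0 ?T_ge0.
have -> : \sum_(j <oo) (T j.+1 x j.+1)%:E = 1.
  rewrite -(Q1 x) /Qs [RHS]series_shift0//;
    (by move=> k; rewrite lee_fin T_ge0) || (by rewrite T_0).
under eq_eseriesr do rewrite P_rec.
rewrite (G2 _ _ _ (aP_ge0 x) (aP0 x) (sum_aP x) (expR_ge0 _)).
have -> : Rintegral mu setT (fun y => (kap x y * w y * qf y)%R) = lam x.
  by rewrite /bp_lam; congr (Rintegral _ _ _); apply/funext => y; rewrite q1 mulr1.
rewrite expRN mulVf ?gt_eqF ?expR_gt0// mul1e.
congr (_ + _).
transitivity (\sum_(i <oo) ((i%:R)%:E * \int[mu]_y (kap x y * w y * T i y i)%:E)).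
  apply: eq_eseriesr => i _; rewrite EFinM /aP (RintE x _ 1%R)//; try exact: (mkwg x _ (mT i i)).
  by move=> y; apply: kwg_le; rewrite T_ge0 T_le1.
rewrite (sumInt _ (fun i y => T i y i) (fun i => i%:R))//; last first.
- by move=> i; exact: (mT i i).
- by move=> i y; exact: T_ge0.
apply: eq_integral => y _.
by rewrite -/(Ms y) EFinM muleAC.
Qed.

End Gen.
Theorem lemma3p2 (R : realType) (d : measure_display) (S : measurableType d)
  (mu : {measure set S -> \bar R}) (kap : S -> S -> R) :
  mu setT = 1%E ->
  (forall x y, 0 <= kap x y) ->
  (forall x y, kap x y = kap y x) ->
  measurable_fun setT (fun p : S * S => kap p.1 p.2) ->
  (mu \x mu)%E.-integrable setT (fun p : S * S => (kap p.1 p.2)%:E) ->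
  (forall x, (\int[mu]_y (kap x y)%:E < +oo)%E) ->
  chi_hat mu kap
    = (\sum_(0 <= j <oo) hat_inner mu kap (hatT_pow mu kap j) (fun _ => 1%E))%E
  /\ ((0 < hat_mu_S mu kap)%E ->
      chi_hat mu kap = (hat_mu_S mu kap * chi_dual mu kap)%E
      /\ (hat_mu_S mu kap * chi_dual mu kap
          = (1 - rho_tot mu kap) * chi_dual mu kap)%E).
Proof.
move=> H1 Hk0 _ Hkm _ Hkint.
have Hs : Setup mu kap by split.
have Hw1 : WOK (@Defs.one_fun R d S).
  split; try by move=> y; rewrite /Defs.one_fun ?ler01.
  exact: measurable_cst.
pose q := @qf R d S mu kap Defs.one_fun.
have q0 : forall x, 0 <= q x by move=> x; exact: (qf_ge0 (w:=Defs.one_fun)).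
have q1 : forall x, q x <= 1 by move=> x; exact: (qf_le1 (w:=Defs.one_fun)).
have mq : measurable_fun setT q by exact: (mqf (w:=Defs.one_fun)).
have Hwq : WOK q by split.
have hwq : hat_w mu kap = q.
  apply/funext => x; rewrite /hat_w /rho_x /bp_rho /bp_finite_prob.
  under eq_eseriesr do rewrite pmfE.
  rewrite /q /qf /Qs; ring.
have lamh : forall x, bp_lam mu kap q x =
    Rintegral mu setT (fun y => kap x y * Defs.one_fun y * q y).
  by move=> x; rewrite /bp_lam /Defs.one_fun; congr (Rintegral _ _ _); apply/funext=> y; rewrite mulr1.
have qE : forall x, q x = expR (- bp_lam mu kap Defs.one_fun x) * expR (bp_lam mu kap q x).
  move=> x; apply: EFin_inj; rewrite lamh.
  by rewrite -(QsE (w:=Defs.one_fun)) (Qfix (w:=Defs.one_fun)).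
have qpos : forall x, 0 < q x by move=> x; rewrite qE mulr_gt0// expR_gt0.
have fix1 : forall x, expR (- bp_lam mu kap q x) * q x = expR (- bp_lam mu kap Defs.one_fun x).
  move=> x; rewrite qE mulrCA -expRD addNr expR0 mulr1//.
have dual : forall k x, bp_trunc mu kap q k x k * q x = bp_trunc mu kap Defs.one_fun k x k.
  move=> k; elim: k {-2}k (leqnn k) => [|K IH] [|j] jK x; rewrite ?T_0 ?mul0r//.
  rewrite (P_rec (w:=q)) (P_rec (w:=Defs.one_fun)) mulr_suml; apply: eq_bigr => m _.
  have -> : conv_pow (aP (mu:=mu) (kap:=kap) (w:=q) x) m j =
            conv_pow (aP (mu:=mu) (kap:=kap) (w:=Defs.one_fun) x) m j.
    apply: conv_ext => i ij; rewrite /aP; congr (Rintegral _ _ _); apply/funext => y.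
    rewrite /Defs.one_fun mulr1 -(IH i) ?(leq_trans ij)//; ring.
  by rewrite -fix1; ring.
have Qh1 : forall x, Qs (mu:=mu) (kap:=kap) (w:=q) x = 1%E.
  move=> x; rewrite /Qs.
  transitivity (\sum_(k <oo) (((q x)^-1)%:E * (bp_trunc mu kap Defs.one_fun k x k)%:E))%E.
    apply: eq_eseriesr => k _; rewrite -EFinM -dual mulrCA mulVf ?mulr1//.
    by rewrite gt_eqF.
  rewrite nneseriesZl; last by move=> k _; rewrite lee_fin T_ge0.
  have -> : (\sum_(k <oo) (bp_trunc mu kap Defs.one_fun k x k)%:E)%E = (q x)%:E.
    exact: (QsE (w:=Defs.one_fun)).
  by rewrite -EFinM mulVf// gt_eqF.
pose Mh := Ms (mu:=mu) (kap:=kap) (w:=q).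
pose N := fun x => (\sum_(j <oo) powW (mu:=mu) (kap:=kap) (w:=q) j x)%E.
have Mfx : forall x, Mh x = (1 + \int[mu]_y ((kap x y)%:E * Mh y * (q y)%:E))%E.
  exact: (Mfix (w:=q) Qh1).
have low : forall n x, (\sum_(j < n) powW (mu:=mu) (kap:=kap) (w:=q) j x <= Mh x)%E.
  elim => [|n IH] x; first by rewrite big_ord0; exact: (Ms_ge0 (w:=q)).
  rewrite big_ord_recl /= (Mfx x); apply: leeD => //.
  have mi : forall i, measurable_fun setT
      (fun y => (kap x y)%:E * powW (mu:=mu) (kap:=kap) (w:=q) i y * (q y)%:E)%E.
    move=> i; apply: emeasurable_funM; first apply: emeasurable_funM.
    + exact/measurable_EFinP/mkap.
    + exact: (mpowW (w:=q)).
    + exact/measurable_EFinP.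
  have E : (\int[mu]_y (\sum_(i < n) ((kap x y)%:E * powW (mu:=mu) (kap:=kap) (w:=q) i y * (q y)%:E)))%E
     = (\sum_(i < n) \int[mu]_y ((kap x y)%:E * powW (mu:=mu) (kap:=kap) (w:=q) i y * (q y)%:E))%E.
    apply: ge0_integral_sum => // i y _.
    by rewrite !mule_ge0 ?lee_fin ?(powW_ge0 (w:=q)).
  apply: (@le_trans _ _ (\int[mu]_y (\sum_(i < n) ((kap x y)%:E * powW (mu:=mu) (kap:=kap) (w:=q) i y * (q y)%:E)))%E).
    by rewrite E le_eqVlt; apply/orP; left; apply/eqP; apply: eq_bigr.
  apply: ge0_le_integral => //.
  - by move=> y _; apply: sume_ge0 => i _; rewrite !mule_ge0 ?lee_fin ?(powW_ge0 (w:=q)).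
  - by apply: emeasurable_sum => i; exact: mi.
  - apply: emeasurable_funM; first apply: emeasurable_funM.
    + exact/measurable_EFinP/mkap.
    + exact: (mMs (w:=q)).
    + exact/measurable_EFinP.
  move=> y _; rewrite -ge0_sume_distrl; last first.
    by move=> i _; rewrite mule_ge0 ?lee_fin ?(powW_ge0 (w:=q)).
  rewrite -ge0_sume_distrr; last by move=> i _; exact: (powW_ge0 (w:=q)).
  apply: lee_wpmul2r; first by rewrite lee_fin.
  by apply: lee_wpmul2l; [rewrite lee_fin|exact: IH].
have MhN : forall x, Mh x = N x.
  move=> x; apply/eqP; rewrite eq_le (Pmean_le (w:=q)) /=.
  apply: lime_le; first by apply: is_cvg_nneseries => j *; exact: (powW_ge0 (w:=q)).
  by apply: nearW => K /=; rewrite big_mkord; exact: low.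
have hatT : forall j, hatT_pow mu kap j = powW (mu:=mu) (kap:=kap) (w:=q) j.
  by elim => [|j IH] //=; apply/funext => x; rewrite IH hwq.
have Efin1 : forall x, bp_Efin mu kap Defs.one_fun x = (Mh x * (q x)%:E)%E.
  move=> x; rewrite /bp_Efin /Mh /Ms -esZr; last 2 first.
  - by move=> k; rewrite lee_fin mulr_ge0 ?T_ge0.
  - by rewrite lee_fin.
  apply: eq_eseriesr => k _; rewrite pmfE -dual -EFinM mulrA//.
have mMh : measurable_fun setT Mh by exact: (mMs (w:=q)).
have Mh0 : forall x, (0 <= Mh x)%E by move=> x; exact: (Ms_ge0 (w:=q)).
have chiE : chi_hat mu kap = (\int[mu]_x (Mh x * (q x)%:E))%E.
  by rewrite /chi_hat; apply: eq_integral => x _; rewrite Efin1.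
split.
  rewrite chiE /hat_inner.
  transitivity (\sum_(j <oo) \int[mu]_x (powW (mu:=mu) (kap:=kap) (w:=q) j x * (q x)%:E))%E; last first.
    apply: eq_eseriesr => j _; rewrite hatT hwq; apply: eq_integral => x _.
    by rewrite mule1.
  rewrite -integral_nneseries//.
  - apply: eq_integral => x _; rewrite esZr; last 2 first.
    + by move=> j; exact: (powW_ge0 (w:=q)).
    + by rewrite lee_fin.
    by rewrite -/(N x) MhN.
  - move=> j; apply: emeasurable_funM; first exact: (mpowW (w:=q)).
    exact/measurable_EFinP.
  - by move=> j x _; rewrite mule_ge0 ?lee_fin ?(powW_ge0 (w:=q)).
move=> hpos.
have hS : hat_mu_S mu kap = (\int[mu]_x (q x)%:E)%E by rewrite /hat_mu_S hwq.
have hfin : hat_mu_S mu kap \is a fin_num.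
  rewrite ge0_fin_numE ?(ltW hpos)//; rewrite hS.
  apply: (@le_lt_trans _ _ (\int[mu]_x (cst 1%E) x)%E).
    apply: ge0_le_integral => //.
    - by move=> x _; rewrite lee_fin.
    - exact/measurable_EFinP.
    - by move=> x _; rewrite lee_fin.
  by rewrite integral_cst// H1 mule1 ltry.
have bpE : forall x, bp_E mu kap q x = Mh x.
  move=> x; rewrite /bp_E.
  have -> : bp_rho mu kap q x = 0.
    rewrite /bp_rho /bp_finite_prob; under eq_eseriesr do rewrite pmfE.
    by rewrite -/(Qs x) Qh1 subrr.
  rewrite eqxx adde0 /bp_Efin /Mh /Ms; apply: eq_eseriesr => k _.
  by rewrite pmfE.
have chid : chi_dual mu kap =
    (((fine (hat_mu_S mu kap))^-1)%:E * \int[mu]_x (Mh x * (q x)%:E))%E.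
  rewrite /chi_dual /bp_chi hwq hS; congr (_ * _)%E.
  by apply: eq_integral => x _; rewrite bpE muleC.
have prod : (hat_mu_S mu kap * chi_dual mu kap = \int[mu]_x (Mh x * (q x)%:E))%E.
  rewrite chid muleA -{1}(fineK hfin) -EFinM mulfV ?mul1e//.
  by rewrite gt_eqF// fine_gt0// hpos/= ltey_eq hfin.
split; first by rewrite prod chiE.
congr (_ * _)%E.
rewrite /hat_mu_S /rho_tot.
have mrho : measurable_fun setT (rho_x mu kap).
  have -> : rho_x mu kap = fun x => 1 - q x.
    by apply/funext => x; rewrite -hwq /hat_w; ring.
  by apply: measurable_funB => //; exact: measurable_cst.
have rhoE : forall x, rho_x mu kap x = 1 - q x.
  by move=> x; rewrite -hwq /hat_w; ring.
have irho : mu.-integrable setT (EFin \o rho_x mu kap).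
  apply/integrableP; split; first exact/measurable_EFinP.
  rewrite (eq_integral (fun x => (rho_x mu kap x)%:E)); last first.
    by move=> x _; rewrite /comp abse_EFin rhoE ger0_norm// subr_ge0.
  apply: (@le_lt_trans _ _ (\int[mu]_x (cst 1%E) x)%E).
    apply: ge0_le_integral => //.
    - by move=> x _; rewrite lee_fin rhoE subr_ge0.
    - exact/measurable_EFinP.
    - by move=> x _; rewrite lee_fin rhoE lerBlDr lerDl.
  by rewrite integral_cst// H1 mule1 ltry.
have i1 : mu.-integrable setT (EFin \o (fun _ : S => 1 : R)).
  apply/integrableP; split; first exact/measurable_EFinP.
  by rewrite (eq_integral (cst 1%E)) ?integral_cst ?H1 ?mule1 ?ltry// => x _; rewrite /comp abse_EFin normr1.
rewrite (eq_integral (fun x => (1 : R)%:E - (rho_x mu kap x)%:E))%E; last first.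
  by move=> x _; rewrite /hat_w EFinB.
rewrite integralB_EFin//.
by rewrite (eq_integral (cst 1%E))// integral_cst// H1 mule1.
Qed.
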